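(* Let $\Omega\subset\mathbb{R}^n$ be a smoothly bounded domain, $0<\beta<1$ and $s\in\mathbb{R}\setminus\{0\}$. Assume $u\in C^{1,\beta}(\overline{\Omega})$ satisfies $\inf_{x\in\overline{\Omega}}|\nabla u(x)|\geq\lambda_1$ for some $\lambda_1>0$. Let, for $0<t<1$, $k_t=\min\{k\in\mathbb{N}: k\geq|\log t|/\log 2\}$. Then: (i) if $s\geq 1$, $\||\nabla u|^s\|_{C^{0,\beta}}\leq\|\nabla u\|_{L^\infty}^s+2s\|\nabla u\|_{C^{0,\beta}}^s$; (ii) if $0<s<1$, $\||\nabla u|^s\|_{C^{0,\beta}}\leq\|\nabla u\|_{L^\infty}^s+\frac{2s}{\prod_{j=1}^{k_s}\lambda_1^{2^{j-1}s}}\|\nabla u\|_{C^{0,\beta}}^{2^{k_s}s}$; (iii) if $-1<s<0$, $\||\nabla u|^s\|_{C^{0,\beta}}\leq\lambda_1^s+\frac{2|s|}{\lambda_1^{2|s|}\prod_{j=1}^{k_{|s|}}\lambda_1^{2^{j-1}|s|}}\|\nabla u\|_{C^{0,\beta}}^{2^{k_{|s|}}|s|}$; (iv) if $s\leq -1$, $\||\nabla u|^s\|_{C^{0,\beta}}\leq\lambda_1^s+2|s|\lambda_1^{2s}\|\nabla u\|_{C^{0,\beta}}^{|s|}$.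
   Context: All norms are over $\Omega$; $|\cdot|$ is the Euclidean norm on $\mathbb{R}^n$. For a (scalar or vector valued) function $w$, $\|w\|_{C^{0,\beta}}=\|w\|_{L^\infty}+\sup_{x\neq y}\frac{|w(x)-w(y)|}{|x-y|^\beta}$. *)

(* Defs.v *)
From HB Require Import structures.
From mathcomp Require Import all_boot all_order all_algebra.
From mathcomp Require Import all_classical all_reals all_analysis.
Set Implicit Arguments. Unset Strict Implicit. Unset Printing Implicit Defensive.
Import Order.TTheory GRing.Theory Num.Theory.
Import numFieldNormedType.Exports.
Local Open Scope classical_set_scope.
Local Open Scope ring_scope.

Section Defs.
Context {R : realType} {n : nat}.

Definition eucl (v : 'rV[R]_n) : R := Num.sqrt (\sum_(i < n) v ord0 i ^+ 2).

Definition grad (u : 'rV[R]_n -> R) (x : 'rV[R]_n) : 'rV[R]_n :=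
  \row_(i < n) ('D_(delta_mx ord0 i) u x : R).

Fixpoint iterD (vs : seq 'rV[R]_n) (f : 'rV[R]_n -> R) : 'rV[R]_n -> R :=
  match vs with
  | [::] => f
  | v :: vs' => 'D_v (iterD vs' f)
  end.

Definition smooth (f : 'rV[R]_n -> R) :=
  forall (vs : seq 'rV[R]_n) (x : 'rV[R]_n), differentiable (iterD vs f) x.

Definition smooth_bounded_domain (Om : set 'rV[R]_n) :=
  [/\ Om !=set0, open Om, connected Om, bounded_set Om &
    exists rho : 'rV[R]_n -> R, [/\ smooth rho,
       Om = [set x | rho x < 0] &
       forall x, rho x = 0 -> grad rho x != 0]].

Definition linf_vec (Om : set 'rV[R]_n) (w : 'rV[R]_n -> 'rV[R]_n) : \bar R :=
  ereal_sup [set (eucl (w x))%:E | x in Om].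
Definition linf_scal (Om : set 'rV[R]_n) (f : 'rV[R]_n -> R) : \bar R :=
  ereal_sup [set (`|f x|)%:E | x in Om].

Definition hsemi_vec (Om : set 'rV[R]_n) (be : R) (w : 'rV[R]_n -> 'rV[R]_n) : \bar R :=
  ereal_sup [set r | exists x y, [/\ Om x, Om y, x <> y &
                       r = (eucl (w x - w y) / (eucl (x - y)) `^ be)%:E]].
Definition hsemi_scal (Om : set 'rV[R]_n) (be : R) (f : 'rV[R]_n -> R) : \bar R :=
  ereal_sup [set r | exists x y, [/\ Om x, Om y, x <> y &
                       r = (`|f x - f y| / (eucl (x - y)) `^ be)%:E]].

Definition holder_vec Om be w : \bar R := (linf_vec Om w + hsemi_vec Om be w)%E.
Definition holder_scal Om be f : \bar R := (linf_scal Om f + hsemi_scal Om be f)%E.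

(* u in C^{1,beta}(closure Omega): u differentiable in Omega, u bounded,
   grad u with finite C^{0,beta} norm on Omega *)
Definition C1beta (Om : set 'rV[R]_n) (be : R) (u : 'rV[R]_n -> R) :=
  [/\ forall x, Om x -> differentiable u x,
      (linf_scal Om u < +oo)%E &
      (holder_vec Om be (grad u) < +oo)%E].

End Defs.

Lemma exists_nat_ge {R : realType} (x : R) : exists k : nat, x <= k%:R.
Proof.
exists (Num.truncn `|x|).+1.
apply: (le_trans (ler_norm x)).
by apply/ltW; rewrite (@Num.Theory.truncnS_gt R `|x|)%R.
Qed.

Definition kt {R : realType} (t : R) : nat :=
  ex_minn (exists_nat_ge (`|ln t| / ln 2)).

(* Main.v *)
Require Import Defs.
From HB Require Import structures.
From mathcomp Require Import all_boot all_order all_algebra.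
From mathcomp Require Import all_classical all_reals all_analysis.
From mathcomp Require Import ring lra.
Import Order.TTheory GRing.Theory Num.Theory.
Import numFieldNormedType.Exports.
Local Open Scope classical_set_scope.
Local Open Scope ring_scope.

Lemma CS (R : realType) (n : nat) (a b : 'I_n -> R) :
  (\sum_i a i * b i) ^+ 2 <= (\sum_i a i ^+ 2) * (\sum_i b i ^+ 2).
Proof.
have H : 0 <= \sum_i \sum_j (a i * b j - a j * b i) ^+ 2.
  by apply: sumr_ge0 => i _; apply: sumr_ge0 => j _; exact: sqr_ge0.
have E : \sum_i \sum_j (a i * b j - a j * b i) ^+ 2 =
   2 * ((\sum_i a i ^+ 2) * (\sum_i b i ^+ 2) - (\sum_i a i * b i) ^+ 2).
  have E1 : forall i j, (a i * b j - a j * b i) ^+ 2 =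
     a i ^+ 2 * b j ^+ 2 + b i ^+ 2 * a j ^+ 2 - 2 * ((a i * b i) * (a j * b j)).
    by move=> i j; ring.
  under eq_bigr do under eq_bigr do rewrite E1.
  under eq_bigr do rewrite sumrB big_split /=.
  rewrite sumrB big_split /=.
  have Ex : \sum_i \sum_j (b i ^+ 2 * a j ^+ 2) = \sum_i \sum_j (a i ^+ 2 * b j ^+ 2).
    by rewrite exchange_big; apply: eq_bigr => i _; apply: eq_bigr => j _; rewrite mulrC.
  have E2 : \sum_i \sum_j 2 * (a i * b i * (a j * b j)) = 2 * \sum_i \sum_j (a i * b i * (a j * b j)).
    by rewrite mulr_sumr; apply: eq_bigr => i _; rewrite mulr_sumr.
  rewrite E2.
  rewrite Ex expr2 !big_distrlr /=; ring.
rewrite E in H; rewrite -subr_ge0.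
by rewrite pmulr_rge0 in H.
Qed.
Lemma eucl_rev (R : realType) n (a b : 'rV[R]_n) : `|eucl a - eucl b| <= eucl (a - b).
Proof.
rewrite /eucl.
set A := \sum_i a ord0 i ^+ 2; set B := \sum_i b ord0 i ^+ 2.
set C := \sum_i a ord0 i * b ord0 i.
have ED : \sum_i (a - b) ord0 i ^+ 2 = A + B - 2 * C.
  rewrite /A /B /C mulr_sumr -big_split -sumrB /=; apply: eq_bigr => i _.
  rewrite !mxE; ring.
have A0 : 0 <= A by apply: sumr_ge0 => i _; exact: sqr_ge0.
have B0 : 0 <= B by apply: sumr_ge0 => i _; exact: sqr_ge0.
have HC : C <= Num.sqrt A * Num.sqrt B.
  rewrite -sqrtrM //; apply: le_trans (ler_norm C) _.
  rewrite -sqrtr_sqr ler_sqrt; last by apply: mulr_ge0.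
  exact: CS.
rewrite ED -sqrtr_sqr ler_sqrt; last first.
  apply: le_trans (sqr_ge0 (Num.sqrt A - Num.sqrt B)) _.
  rewrite sqrrB !sqr_sqrtr //; lra.
rewrite sqrrB !sqr_sqrtr //; lra.
Qed.
Lemma in_oo {R : realType} {x b a : R} : x \in `]b, a[ -> b < x /\ x < a.
Proof. by rewrite in_itv /= => /andP. Qed.
Lemma in_cc {R : realType} {x b a : R} : x \in `[b, a] -> b <= x /\ x <= a.
Proof. by rewrite in_itv /= => /andP. Qed.

Definition Kc {R : realType} (s lam L : R) := if 1 <= s then L `^ (s - 1) else lam `^ (s - 1).

Lemma pow_lip_aux (R : realType) (s lam L a b : R) : 0 < lam ->
  lam <= b -> b < a -> a <= L ->
  `|a `^ s - b `^ s| <= `|s| * Kc s lam L * `|a - b|.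
Proof.
move=> l0 lb ba aL.
have b0 : 0 < b by apply: lt_le_trans lb.
have hc : {within `[b, a], continuous (fun x : R => x `^ s)}.
  apply: derivable_within_continuous => x xab.
  apply: derivable_powR; rewrite in_itv /= andbT.
  by apply: lt_le_trans b0 (in_cc xab).1.
have [c cab ->] := @MVT _ (fun x : R => x `^ s) (fun x : R => s * x `^ (s - 1)) b a ba
  (fun (x : R) xab => @is_derive1_powR R s x (lt_trans b0 (in_oo xab).1)) hc.
rewrite normrM normrM; apply: ler_wpM2r => //.
have c0 : 0 < c := lt_trans b0 (in_oo cab).1.
rewrite ler_wpM2l //.
case: (in_oo cab) => cb ca.
rewrite ger0_norm ?powR_ge0 // /Kc; case: ifPn => s1.
+ by apply: ge0_ler_powR; rewrite ?nnegrE ?subr_ge0 //; lra.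
+ rewrite -(opprB 1 s) !powRN; rewrite lef_pV2 ?posrE ?powR_gt0 //.
  by apply: ge0_ler_powR; rewrite ?nnegrE; lra.
Qed.

Lemma pow_lip (R : realType) (s lam L a b : R) : 0 < lam ->
  lam <= a <= L -> lam <= b <= L ->
  `|a `^ s - b `^ s| <= `|s| * Kc s lam L * `|a - b|.
Proof.
move=> l0 /andP[la aL] /andP[lb bL].
have [ab|ab|<-] := ltgtP a b.
- by rewrite distrC (distrC a); apply: pow_lip_aux.
- exact: pow_lip_aux.
- by rewrite !subrr normr0 mulr0.
Qed.

Lemma kt_ge (R : realType) (t : R) : 0 < t < 1 -> 1 <= (2 ^ kt t)%:R * t.
Proof.
move=> /andP[t0 t1]; rewrite /kt; case: ex_minnP => k hk _.
have l2 : 0 < ln (2 : R) by apply: ln_gt0; lra.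
rewrite ler_pdivrMr // in hk.
have lt0 : ln t < 0 by apply: ln_lt0; rewrite t0 t1.
rewrite ltr0_norm // -lnV ?posrE // in hk.
rewrite [_ * ln 2]mulrC mulr_natr -lnXn in hk; last lra.
rewrite ler_ln ?posrE ?invr_gt0 ?exprn_gt0 // in hk.

by rewrite natrX -ler_pdivrMr // div1r.
Qed.

Lemma two_points (R : realType) (n : nat) (Om : set 'rV[R]_n) (x0 : 'rV[R]_n) :
  (0 < n)%N -> open Om -> Om x0 -> exists y0, Om y0 /\ x0 <> y0.
Proof.
move=> n0 Oo Ox.
have := Oo x0 Ox; rewrite /= nbhs_ballP => -[e e0 He].
pose d : 'rV[R]_n := delta_mx ord0 (Ordinal n0).
have d0 : d != 0.
  apply/negP => /eqP/matrixP/(_ ord0 (Ordinal n0)); rewrite !mxE !eqxx /=.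
  by move/eqP; rewrite oner_eq0.
pose t := e / (2 * (`|d| + 1)).
have t0 : 0 < t by rewrite divr_gt0 // mulr_gt0 // ltr_wpDl.
exists (x0 + t *: d); split.
  apply: He; rewrite -ball_normE /=.
  rewrite opprD addrA subrr sub0r normrN normrZ gtr0_norm //.
  have d1 := normr_ge0 d.
  rewrite /t mulrAC ltr_pdivrMr; last by rewrite mulr_gt0 //; lra.
  by rewrite ltr_pM2l //; lra.
move=> /eqP; rewrite -subr_eq0 opprD addrA subrr sub0r oppr_eq0 scaler_eq0.
by rewrite (negPf d0) orbF gt_eqF.
Qed.

Lemma keyP (R : realType) (p lam M h : R) : 1 <= p -> 0 < lam -> lam <= M ->
  0 <= h -> h <= M -> h * lam `^ p <= M `^ p * lam.
Proof.
move=> p1 l0 lM h0 hM.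
have M0 : 0 < M by apply: lt_le_trans l0 lM.
have p0 : 0 < p by lra.
rewrite -[lam `^ p](mulr_powRB1 (ltW l0) p0) -[M `^ p](mulr_powRB1 (ltW M0) p0).
have e : lam `^ (p - 1) <= M `^ (p - 1).
  by apply: ge0_ler_powR; rewrite ?nnegrE; lra.
have := powR_ge0 lam (p - 1).
rewrite [h * _]mulrC -mulrA [M * _]mulrC -mulrA (mulrC _ lam).
move=> ge; rewrite -mulrA ler_pM2l //.
by apply: ler_pM.
Qed.

Lemma prod_pow (R : realType) (lam s : R) (k : nat) : 0 < lam ->
  (\prod_(1 <= j < k.+1) lam `^ ((2 ^ j.-1)%:R * s)) * lam `^ s = lam `^ ((2 ^ k)%:R * s).
Proof.
move=> l0; elim: k => [|k IH].
  rewrite big_geq // mul1r expn0 mulr1n.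
  rewrite mul1r.
  reflexivity.
rewrite (big_nat_recr k.+1 1) //= mulrAC IH -powRD; last by rewrite (gt_eqF l0) implybT.
by congr (_ `^ _); rewrite expnS natrM; ring.
Qed.


Lemma eucl_ge0 (R : realType) n (v : 'rV[R]_n) : 0 <= eucl v.
Proof. exact: sqrtr_ge0. Qed.

Lemma neg_pow_le (R : realType) (s a b : R) : s < 0 -> 0 < a -> a <= b -> b `^ s <= a `^ s.
Proof.
move=> s0 a0 ab.
have b0 : 0 < b by apply: lt_le_trans ab.
have aux : forall t : R, 0 < t -> b `^ (- t) <= a `^ (- t).
  move=> t t0; rewrite !powRN lef_pV2 ?posrE ?powR_gt0 //.
  by apply: ge0_ler_powR; rewrite ?nnegrE; lra.
by have := aux (- s); rewrite opprK; apply; lra.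
Qed.

Lemma powRm1 (R : realType) (lam s : R) : 0 < lam -> lam `^ (s - 1) = lam `^ s / lam.
Proof.
move=> l0; rewrite powRD; last by rewrite (gt_eqF l0) implybT.
by rewrite powR_inv1 // ltW.
Qed.
Lemma alg2 (R : realFieldType) (s lam a b c h : R) : 0 < s -> 0 < lam -> 0 < a -> 0 < b -> 0 <= h ->
  h * b <= c * lam -> s * (a / lam) * h <= 2 * s / (b / a) * c.
Proof.
move=> s0 l0 a0 b0 h0 key.
have lne : lam != 0 by rewrite gt_eqF.
have ane : a != 0 by rewrite gt_eqF.
have bne : b != 0 by rewrite gt_eqF.
have c0 : 0 <= c * lam by apply: le_trans key; rewrite mulr_ge0 // ltW.
have -> : s * (a / lam) * h = (s * a / (lam * b)) * (h * b).
  by field; rewrite ?lne ?ane ?bne.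
have -> : 2 * s / (b / a) * c = (s * a / (lam * b)) * (2 * (c * lam)).
  by field; rewrite ?lne ?ane ?bne.
rewrite ler_pM2l; last by rewrite divr_gt0 ?mulr_gt0.
lra.
Qed.

Lemma alg3 (R : realFieldType) (s lam a b c h : R) : 0 < s -> 0 < lam -> 0 < a -> 0 < b -> 0 <= h ->
  h * b <= c * lam -> s * (a^-1 / lam) * h <= 2 * s / (a * a * (b / a)) * c.
Proof.
move=> s0 l0 a0 b0 h0 key.
have lne : lam != 0 by rewrite gt_eqF.
have ane : a != 0 by rewrite gt_eqF.
have bne : b != 0 by rewrite gt_eqF.
have c0 : 0 <= c * lam by apply: le_trans key; rewrite mulr_ge0 // ltW.
have -> : s * (a^-1 / lam) * h = (s / (a * lam * b)) * (h * b).
  by field; rewrite ?lne ?ane ?bne.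
have -> : 2 * s / (a * a * (b / a)) * c = (s / (a * lam * b)) * (2 * (c * lam)).
  by field; rewrite ?lne ?ane ?bne.
rewrite ler_pM2l; last by rewrite divr_gt0 ?mulr_gt0.
lra.
Qed.

Lemma alg4 (R : realFieldType) (s lam a c h : R) : 0 < s -> 0 < lam -> 0 < a -> 0 <= h ->
  h * a <= c * lam -> s * (a^-1 / lam) * h <= 2 * s * (a^-1 * a^-1) * c.
Proof.
move=> s0 l0 a0 h0 key.
have lne : lam != 0 by rewrite gt_eqF.
have ane : a != 0 by rewrite gt_eqF.
have c0 : 0 <= c * lam by apply: le_trans key; rewrite mulr_ge0 // ltW.
have -> : s * (a^-1 / lam) * h = (s / (a * a * lam)) * (h * a).
  by field; rewrite ?lne ?ane.
have -> : 2 * s * (a^-1 * a^-1) * c = (s / (a * a * lam)) * (2 * (c * lam)).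
  by field; rewrite ?lne ?ane.
rewrite ler_pM2l; last by rewrite divr_gt0 ?mulr_gt0.
lra.
Qed.
Theorem lemma4p1 (R : realType) (n : nat) (Om : set 'rV[R]_n)
    (be s lam1 : R) (u : 'rV[R]_n -> R) :
  smooth_bounded_domain Om -> 0 < be < 1 -> s != 0 ->
  C1beta Om be u ->
  0 < lam1 ->
  (lam1%:E <= ereal_inf [set (eucl (grad u x))%:E | x in Om])%E ->
  let L := fine (linf_vec Om (grad u)) in
  let M := fine (holder_vec Om be (grad u)) in
  let N := holder_scal Om be (fun x => eucl (grad u x) `^ s) in
  [/\ 1 <= s ->
        (N <= (L `^ s + 2 * s * M `^ s)%:E)%E,
      0 < s < 1 ->
        (N <= (L `^ s + 2 * s
                 / (\prod_(1 <= j < (kt s).+1) lam1 `^ ((2 ^ j.-1)%:R * s))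
                 * M `^ ((2 ^ kt s)%:R * s))%:E)%E,
      -1 < s < 0 ->
        (N <= (lam1 `^ s + 2 * `|s|
                 / (lam1 `^ (2 * `|s|)
                    * \prod_(1 <= j < (kt `|s|).+1) lam1 `^ ((2 ^ j.-1)%:R * `|s|))
                 * M `^ ((2 ^ kt `|s|)%:R * `|s|))%:E)%E &
      s <= -1 ->
        (N <= (lam1 `^ s + 2 * `|s| * lam1 `^ (2 * s) * M `^ `|s|)%:E)%E].
Proof.
move=> [Om0 Oo _ _ _] /andP[be0 be1] s0 [_ _ Hfin] lam0 Hinf L M N.
have Hlam : forall x, Om x -> lam1 <= eucl (grad u x).
  move=> x Ox.
  have h1 : (ereal_inf [set (eucl (grad u x))%:E | x in Om] <= (eucl (grad u x))%:E)%E.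
    by apply: ereal_inf_lbound; exists x.
  by have := le_trans Hinf h1; rewrite lee_fin.
case: Om0 => x0 Ox0.
have n0 : (0 < n)%N.
  case: (posnP n) => [n0|//]; exfalso.
  have E0 : \sum_(i < n) (grad u x0) ord0 i ^+ 2 = 0.
    apply: big1 => -[m hm] _; exfalso; by have := hm; rewrite n0 ltn0.
  by have := Hlam x0 Ox0; rewrite /eucl E0 sqrtr0; lra.
have [y0 [Oy0 xy0]] := @two_points _ _ _ _ n0 Oo Ox0.
pose D x y := eucl (grad u x - grad u y) / eucl (x - y) `^ be.
have lvlb : ((eucl (grad u x0))%:E <= linf_vec Om (grad u))%E.
  by apply: ereal_sup_ubound; exists x0.
have hvlb : ((D x0 y0)%:E <= hsemi_vec Om be (grad u))%E.
  by apply: ereal_sup_ubound; exists x0, y0.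
move: Hfin; rewrite /M /L /holder_vec.
case El : (linf_vec Om (grad u)) lvlb => [l||] lvlb;
case Eh : (hsemi_vec Om be (grad u)) hvlb => [h||] hvlb //=.
move=> _.
have Hub : forall x, Om x -> eucl (grad u x) <= l.
  by move=> x Ox; rewrite -lee_fin -El; apply: ereal_sup_ubound; exists x.
have HD : forall x y, Om x -> Om y -> x <> y -> D x y <= h.
  by move=> x y Ox Oy xy; rewrite -lee_fin -Eh; apply: ereal_sup_ubound; exists x, y.
have D0 : forall x y, 0 <= D x y.
  by move=> x y; rewrite /D divr_ge0 ?eucl_ge0 ?powR_ge0.
have h0 : 0 <= h := le_trans (D0 x0 y0) (HD x0 y0 Ox0 Oy0 xy0).
have lam_l : lam1 <= l := le_trans (Hlam x0 Ox0) (Hub x0 Ox0).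
have HN : forall S, (forall x, Om x -> eucl (grad u x) `^ s <= S) ->
    (N <= (S + `|s| * Kc s lam1 l * h)%:E)%E.
  move=> S HS; rewrite /N /holder_scal EFinD; apply: leeD.
  - apply: ge_ereal_sup => _ [x Ox <-]; rewrite lee_fin ger0_norm ?powR_ge0 //.
    exact: HS.
  - apply: ge_ereal_sup => _ [x [y [Ox Oy xy ->]]]; rewrite lee_fin.
    have K0 : 0 <= `|s| * Kc s lam1 l.
      by rewrite mulr_ge0 // /Kc; case: ifP => _; exact: powR_ge0.
    apply: le_trans (_ : `|s| * Kc s lam1 l * D x y <= _); last first.
      by rewrite ler_wpM2l // HD.
    rewrite /D mulrA; apply: ler_wpM2r; first by rewrite invr_ge0 powR_ge0.
    apply: le_trans (@pow_lip _ s lam1 l _ _ lam0 _ _) _.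
    + by rewrite Hlam // Hub.
    + by rewrite Hlam // Hub.
    + by rewrite ler_wpM2l // eucl_rev.
have l0 : 0 < l by apply: lt_le_trans lam_l.
have lM : lam1 <= l + h by lra.
have hM : h <= l + h by lra.
have M0 : 0 < l + h by lra.
have HNp : 0 < s -> (N <= (l `^ s + `|s| * Kc s lam1 l * h)%:E)%E.
  move=> sp; apply: HN => x Ox; apply: ge0_ler_powR; rewrite ?nnegrE ?eucl_ge0 ?Hub //.
  - exact: ltW.
  - exact: ltW.
have HNn : s < 0 -> (N <= (lam1 `^ s + `|s| * Kc s lam1 l * h)%:E)%E.
  by move=> sn; apply: HN => x Ox; apply: neg_pow_le => //; apply: Hlam.
have lne : lam1 != 0 by rewrite gt_eqF.
split => hs.
-
  apply: le_trans (HNp _) _; first lra.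
  rewrite lee_fin lerD2l /Kc hs ger0_norm; last lra.
  have e1 : l `^ (s - 1) <= (l + h) `^ (s - 1).
    by apply: ge0_ler_powR; rewrite ?nnegrE; lra.
  have e2 := powR_ge0 l (s - 1).
  rewrite -(mulr_powRB1 (ltW M0)); last lra.
  apply: (@le_trans _ _ (s * ((l + h) `^ (s - 1) * (l + h)))).
    by rewrite -mulrA ler_pM2l; [apply: ler_pM | lra].
  have := powR_ge0 (l + h) (s - 1).
  set b := (l + h) `^ (s - 1) => b0.
  have : 0 <= s * (b * (l + h)) by rewrite mulr_ge0 ?mulr_ge0 //; lra.
  rewrite (mulrC (l + h) b); lra.
-
  case/andP: hs => sp s1.
  apply: le_trans (HNp sp) _.
  rewrite lee_fin lerD2l /Kc ifF; last by apply/negbTE; rewrite -ltNge.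
  rewrite ger0_norm; last lra.
  have hp : 1 <= (2 ^ kt s)%:R * s by apply: kt_ge; rewrite sp s1.
  have EP := @prod_pow _ lam1 s (kt s) lam0.
  have key := @keyP _ _ lam1 (l + h) h hp lam0 lM h0 hM.
  move: EP key hp.
  set p := (2 ^ kt s)%:R * s.
  set P := \prod_(1 <= j < (kt s).+1) _.
  move=> EP key hp.
  rewrite powRm1 //.
  have a0 : 0 < lam1 `^ s by rewrite powR_gt0.
  have b0 : 0 < lam1 `^ p by rewrite powR_gt0.
  have c0 : 0 < (l + h) `^ p by rewrite powR_gt0.
  have EPi : P = lam1 `^ p / lam1 `^ s by rewrite -EP mulfK // gt_eqF.
  rewrite EPi.
  by apply: alg2.
-
  case/andP: hs => s1 sn.
  apply: le_trans (HNn sn) _.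
  rewrite lee_fin lerD2l /Kc ifF; last by apply/negbTE; rewrite -ltNge; lra.
  have Es : s = - `|s| by rewrite ltr0_norm ?opprK.
  have sg0 : 0 < `|s| by rewrite normr_gt0.
  have sg1 : `|s| < 1 by rewrite ltr0_norm //; lra.
  have Ls : lam1 `^ s = (lam1 `^ `|s|)^-1 by rewrite {1}Es powRN.
  have L2 : lam1 `^ (2 * `|s|) = lam1 `^ `|s| * lam1 `^ `|s|.
    by rewrite -powRD ?lne ?implybT //; congr (_ `^ _); ring.
  have hp : 1 <= (2 ^ kt `|s|)%:R * `|s| by apply: kt_ge; rewrite sg0 sg1.
  have EP := @prod_pow _ lam1 `|s| (kt `|s|) lam0.
  have key := @keyP _ _ lam1 (l + h) h hp lam0 lM h0 hM.
  rewrite powRm1 // Ls L2.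
  move: EP key hp.
  set p := (2 ^ kt `|s|)%:R * `|s|.
  set P := \prod_(1 <= j < (kt `|s|).+1) _.
  move=> EP key hp.
  have a0 : 0 < lam1 `^ `|s| by rewrite powR_gt0.
  have b0 : 0 < lam1 `^ p by rewrite powR_gt0.
  have EPi : P = lam1 `^ p / lam1 `^ `|s| by rewrite -EP mulfK // gt_eqF.
  rewrite EPi.
  by apply: alg3.
-
  have sn : s < 0 by lra.
  apply: le_trans (HNn sn) _.
  rewrite lee_fin lerD2l /Kc ifF; last by apply/negbTE; rewrite -ltNge; lra.
  have Es : s = - `|s| by rewrite ltr0_norm ?opprK.
  have sg0 : 0 < `|s| by rewrite normr_gt0.
  have sg1 : 1 <= `|s| by rewrite ltr0_norm //; lra.
  have Ls : lam1 `^ s = (lam1 `^ `|s|)^-1 by rewrite {1}Es powRN.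
  have L2 : lam1 `^ (2 * s) = lam1 `^ s * lam1 `^ s.
    by rewrite -powRD ?lne ?implybT //; congr (_ `^ _); ring.
  have key := @keyP _ _ lam1 (l + h) h sg1 lam0 lM h0 hM.
  rewrite powRm1 // L2 Ls.
  have a0 : 0 < lam1 `^ `|s| by rewrite powR_gt0.
  by apply: alg4.
Qed.
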